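(* Let $\mathcal{A}$ be an alternative $W^{*}$-factor, $\mathcal{B}$ an alternative complex $\ast$-algebra, and $\Phi:\mathcal{A}\to\mathcal{B}$ a bijection preserving product $ab+ba^{*}$ (resp. $ab-ba^{*}$). Let $p_{1}\in\mathcal{A}$ be a projection with $p_{1}\neq 1_{\mathcal{A}}$, $p_{2}=1_{\mathcal{A}}-p_{1}$, and $\mathcal{A}_{ij}=p_{i}\mathcal{A}p_{j}$. Then $\Phi(a_{11}+b_{12}+c_{21}+d_{22})=\Phi(a_{11})+\Phi(b_{12})+\Phi(c_{21})+\Phi(d_{22})$ for all $a_{11}\in\mathcal{A}_{11}$, $b_{12}\in\mathcal{A}_{12}$, $c_{21}\in\mathcal{A}_{21}$, $d_{22}\in\mathcal{A}_{22}$.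
   Context: An alternative $W^{*}$-factor is a prime alternative $C^{*}$-algebra (complete normed alternative complex $\ast$-algebra with $\|a^{*}a\|=\|a\|^{2}$) that is a dual Banach space; it is unital. A projection is a nonzero self-adjoint idempotent. $\mathcal{A}_{ij}$ are the Peirce components with respect to $p_{1}$. $\Phi$ preserves product $ab+ba^{*}$ (resp. $ab-ba^{*}$) if $\Phi(ab+ba^{*})=\Phi(a)\Phi(b)+\Phi(b)\Phi(a)^{*}$ (resp. $\Phi(ab-ba^{*})=\Phi(a)\Phi(b)-\Phi(b)\Phi(a)^{*}$) for all $a,b\in\mathcal{A}$. *)

(* Defs.v *)
From mathcomp Require Import all_boot all_order all_algebra.
From mathcomp Require Import complex.
From mathcomp Require Import reals.
Set Implicit Arguments. Unset Strict Implicit. Unset Printing Implicit Defensive.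
Import Order.TTheory GRing.Theory Num.Theory.
Local Open Scope ring_scope.

Section AltDefs.
Variable R : realType.
Local Notation C := (R[i]).
Local Notation normC := (@Normc.normc R).

Definition normed_space (X : lmodType C) (n : X -> R) : Prop :=
  [/\ forall x, 0 <= n x,
      forall x, n x = 0 -> x = 0,
      forall x y, n (x + y) <= n x + n y &
      forall (c : C) x, n (c *: x) = normC c * n x].

Definition complete_norm (X : lmodType C) (n : X -> R) : Prop :=
  forall u : nat -> X,
    (forall e : R, 0 < e -> exists N : nat, forall m k : nat,
        (N <= m)%N -> (N <= k)%N -> n (u m - u k) < e) ->
    exists l : X, forall e : R, 0 < e -> exists N : nat, forall m : nat,
        (N <= m)%N -> n (u m - l) < e.

Definition banach_space (X : lmodType C) (n : X -> R) : Prop :=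
  normed_space n /\ complete_norm n.

Definition alt_star_alg (A : lmodType C) (mul : A -> A -> A) (star : A -> A)
  : Prop :=
  [/\ forall (c : C) x y z, mul (c *: x + y) z = c *: mul x z + mul y z,
      forall (c : C) x y z, mul z (c *: x + y) = c *: mul z x + mul z y,
      forall x y, mul (mul x x) y = mul x (mul x y) &
      forall x y, mul (mul y x) x = mul y (mul x x)] /\
  [/\ forall (c : C) x y, star (c *: x + y) = (c^*)%C *: star x + star y,
      forall x, star (star x) = x &
      forall x y, star (mul x y) = mul (star y) (star x)].

Definition alt_Cstar_alg (A : lmodType C) (mul : A -> A -> A) (star : A -> A)
  (n : A -> R) : Prop :=
  [/\ alt_star_alg mul star,
      banach_space n,
      forall x y, n (mul x y) <= n x * n y &
      forall x, n (mul (star x) x) = n x ^+ 2].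

Definition is_ideal (A : lmodType C) (mul : A -> A -> A) (I : A -> Prop) : Prop :=
  [/\ I 0,
      forall (c : C) x y, I x -> I y -> I (c *: x + y) &
      forall x y, I x -> I (mul x y) /\ I (mul y x)].

Definition prime_alg (A : lmodType C) (mul : A -> A -> A) : Prop :=
  forall I J : A -> Prop, is_ideal mul I -> is_ideal mul J ->
    (forall x y, I x -> J y -> mul x y = 0) ->
    (forall x, I x -> x = 0) \/ (forall y, J y -> y = 0).

(* (A, n) is (isometrically isomorphic to) the dual of some Banach space X *)
Definition dual_banach (A : lmodType C) (n : A -> R) : Prop :=
  exists (X : lmodType C) (nX : X -> R) (T : A -> X -> C),
    banach_space nX /\
    [/\
        forall a (c : C) x y, T a (c *: x + y) = c * T a x + T a y,
        forall a, exists M : R, forall x, normC (T a x) <= M * nX x,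
        forall (c : C) a b x, T (c *: a + b) x = c * T a x + T b x,
        forall f : X -> C,
          (forall (c : C) x y, f (c *: x + y) = c * f x + f y) ->
          (exists M : R, forall x, normC (f x) <= M * nX x) ->
          exists a, forall x, T a x = f x &
        (* T is isometric for the operator norm: n a = sup_{nX x <= 1} |T a x| *)
        forall a, (forall x, normC (T a x) <= n a * nX x) /\
          (forall e : R, 0 < e -> exists x, nX x <= 1 /\ n a - e < normC (T a x))].

Definition alt_Wstar_factor (A : lmodType C) (mul : A -> A -> A) (star : A -> A)
  (n : A -> R) : Prop :=
  [/\ alt_Cstar_alg mul star n, prime_alg mul & dual_banach n].

Definition is_unit_of (A : lmodType C) (mul : A -> A -> A) (one : A) : Prop :=
  forall x, mul one x = x /\ mul x one = x.

Definition projection (A : lmodType C) (mul : A -> A -> A) (star : A -> A) (p : A)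
  : Prop := [/\ p <> 0, star p = p & mul p p = p].

Definition peirce (A : lmodType C) (mul : A -> A -> A) (p q : A) (x : A) : Prop :=
  exists a, x = mul (mul p a) q.

Definition preserves_plus (A B : lmodType C) (mulA : A -> A -> A) (starA : A -> A)
  (mulB : B -> B -> B) (starB : B -> B) (Phi : A -> B) : Prop :=
  forall a b, Phi (mulA a b + mulA b (starA a)) =
              mulB (Phi a) (Phi b) + mulB (Phi b) (starB (Phi a)).

Definition preserves_minus (A B : lmodType C) (mulA : A -> A -> A) (starA : A -> A)
  (mulB : B -> B -> B) (starB : B -> B) (Phi : A -> B) : Prop :=
  forall a b, Phi (mulA a b - mulA b (starA a)) =
              mulB (Phi a) (Phi b) - mulB (Phi b) (starB (Phi a)).

End AltDefs.

(* Main.v *)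
Require Import Defs.
From mathcomp Require Import all_boot all_order all_algebra.
From mathcomp Require Import complex.
From mathcomp Require Import reals.
Import GRing.Theory Num.Theory.
Local Open Scope ring_scope.

Section Alg.
Variable R : realType.
Local Notation C := R[i].
Variable A : lmodType C.
Variable mul : A -> A -> A.
Variable star : A -> A.
Variable one : A.
Hypothesis mulDl : forall (c : C) x y z, mul (c *: x + y) z = c *: mul x z + mul y z.
Hypothesis mulDr : forall (c : C) x y z, mul z (c *: x + y) = c *: mul z x + mul z y.
Hypothesis altl : forall x y, mul (mul x x) y = mul x (mul x y).
Hypothesis altr : forall x y, mul (mul y x) x = mul y (mul x x).
Hypothesis starD : forall (c : C) x y, star (c *: x + y) = (c^*)%C *: star x + star y.
Hypothesis starK : forall x, star (star x) = x.
Hypothesis starM : forall x y, star (mul x y) = mul (star y) (star x).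
Hypothesis unit : forall x, mul one x = x /\ mul x one = x.
Variable p : A.
Hypothesis pp : mul p p = p.
Hypothesis sp : star p = p.

Lemma conj1' : ((1 : C)^*)%C = 1.
Proof. by apply/eqP; rewrite eq_complex /= oppr0 !eqxx. Qed.
Lemma conjN1' : ((-1 : C)^*)%C = -1.
Proof. by apply/eqP; rewrite eq_complex /= !oppr0 !eqxx. Qed.

Lemma mulDl1 x y z : mul (x + y) z = mul x z + mul y z.
Proof. by have := mulDl 1 x y z; rewrite !scale1r. Qed.
Lemma mulDr1 x y z : mul z (x + y) = mul z x + mul z y.
Proof. by have := mulDr 1 x y z; rewrite !scale1r. Qed.
Lemma mul0l z : mul 0 z = 0.
Proof. have h := mulDl1 0 0 z; rewrite addr0 in h.
by apply: (addrI (mul 0 z)); rewrite -h addr0. Qed.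
Lemma mul0r z : mul z 0 = 0.
Proof. have h := mulDr1 0 0 z; rewrite addr0 in h.
by apply: (addrI (mul z 0)); rewrite -h addr0. Qed.
Lemma mulZl c x z : mul (c *: x) z = c *: mul x z.
Proof. by have := mulDl c x 0 z; rewrite !addr0 mul0l addr0. Qed.
Lemma mulZr c x z : mul z (c *: x) = c *: mul z x.
Proof. by have := mulDr c x 0 z; rewrite !addr0 mul0r addr0. Qed.
Lemma mulNl x z : mul (- x) z = - mul x z.
Proof. by rewrite -scaleN1r mulZl scaleN1r. Qed.
Lemma mulNr x z : mul z (- x) = - mul z x.
Proof. by rewrite -scaleN1r mulZr scaleN1r. Qed.
Lemma mulBl x y z : mul (x - y) z = mul x z - mul y z.
Proof. by rewrite mulDl1 mulNl. Qed.
Lemma mulBr x y z : mul z (x - y) = mul z x - mul z y.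
Proof. by rewrite mulDr1 mulNr. Qed.
Lemma mul1l x : mul one x = x. Proof. by case: (unit x). Qed.
Lemma mul1r x : mul x one = x. Proof. by case: (unit x). Qed.

Lemma starD1 x y : star (x + y) = star x + star y.
Proof. by have := starD 1 x y; rewrite !scale1r conj1' scale1r. Qed.
Lemma star0 : star 0 = 0.
Proof. have h := starD1 0 0; rewrite addr0 in h.
by apply: (addrI (star 0)); rewrite -h addr0. Qed.
Lemma starZ c x : star (c *: x) = (c^*)%C *: star x.
Proof. by have := starD c x 0; rewrite !addr0 star0 addr0. Qed.
Lemma starN x : star (- x) = - star x.
Proof. by rewrite -scaleN1r starZ conjN1' scaleN1r. Qed.
Lemma starSub x y : star (x - y) = star x - star y.
Proof. by rewrite starD1 starN. Qed.
Lemma star1 : star one = one.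
Proof. have h := mul1l (star one).
by have := congr1 star h; rewrite starM !starK mul1l. Qed.

Lemma flex x y : mul (mul x y) x = mul x (mul y x).
Proof.
have h := altr (y + x) x.
rewrite !mulDr1 !mulDl1 !mulDr1 in h.
rewrite altr (altr x x) altl in h.
by move/addrI/addIr: h.
Qed.



Definition q := one - p.
Definition cmp u v y := mul (mul u y) v.

Lemma Lp_Lp y : mul p (mul p y) = mul p y.
Proof. by rewrite -altl pp. Qed.
Lemma Rp_Rp y : mul (mul y p) p = mul y p.
Proof. by rewrite altr pp. Qed.
Lemma flexp y : mul p (mul y p) = mul (mul p y) p.
Proof. by rewrite flex. Qed.
Lemma qL y : mul q y = y - mul p y.
Proof. by rewrite /q mulBl mul1l. Qed.
Lemma qR y : mul y q = y - mul y p.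
Proof. by rewrite /q mulBr mul1r. Qed.

Lemma cmpD u v x y : cmp u v (x + y) = cmp u v x + cmp u v y.
Proof. by rewrite /cmp mulDr1 mulDl1. Qed.
Lemma cmpZ u v c x : cmp u v (c *: x) = c *: cmp u v x.
Proof. by rewrite /cmp mulZr mulZl. Qed.
Lemma cmpN u v x : cmp u v (- x) = - cmp u v x.
Proof. by rewrite /cmp mulNr mulNl. Qed.
Lemma cmpB u v x y : cmp u v (x - y) = cmp u v x - cmp u v y.
Proof. by rewrite cmpD cmpN. Qed.
Lemma cmp0 u v : cmp u v 0 = 0.
Proof. by rewrite /cmp mul0r mul0l. Qed.

Lemma c11_Lp y : cmp p p (mul p y) = cmp p p y.
Proof. by rewrite /cmp Lp_Lp. Qed.
Lemma c12_Lp y : cmp p q (mul p y) = cmp p q y.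
Proof. by rewrite /cmp Lp_Lp. Qed.
Lemma c21_Lp y : cmp q p (mul p y) = 0.
Proof. by rewrite /cmp qL Lp_Lp subrr mul0l. Qed.
Lemma c22_Lp y : cmp q q (mul p y) = 0.
Proof. by rewrite /cmp qL Lp_Lp subrr mul0l. Qed.
Lemma c11_Rp y : cmp p p (mul y p) = cmp p p y.
Proof. by rewrite /cmp flexp Rp_Rp. Qed.
Lemma c12_Rp y : cmp p q (mul y p) = 0.
Proof. by rewrite /cmp flexp qR Rp_Rp subrr. Qed.
Lemma c21_Rp y : cmp q p (mul y p) = cmp q p y.
Proof. by rewrite /cmp !qL mulBl flexp !Rp_Rp mulBl. Qed.
Lemma c22_Rp y : cmp q q (mul y p) = 0.
Proof. by rewrite /cmp qL flexp qR mulBl !Rp_Rp subrr. Qed.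

Lemma c11_Lq y : cmp p p (mul q y) = 0.
Proof. by rewrite qL cmpB c11_Lp subrr. Qed.
Lemma c12_Lq y : cmp p q (mul q y) = 0.
Proof. by rewrite qL cmpB c12_Lp subrr. Qed.
Lemma c21_Lq y : cmp q p (mul q y) = cmp q p y.
Proof. by rewrite qL cmpB c21_Lp subr0. Qed.
Lemma c22_Lq y : cmp q q (mul q y) = cmp q q y.
Proof. by rewrite qL cmpB c22_Lp subr0. Qed.
Lemma c11_Rq y : cmp p p (mul y q) = 0.
Proof. by rewrite qR cmpB c11_Rp subrr. Qed.
Lemma c12_Rq y : cmp p q (mul y q) = cmp p q y.
Proof. by rewrite qR cmpB c12_Rp subr0. Qed.
Lemma c21_Rq y : cmp q p (mul y q) = 0.
Proof. by rewrite qR cmpB c21_Rp subrr. Qed.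
Lemma c22_Rq y : cmp q q (mul y q) = cmp q q y.
Proof. by rewrite qR cmpB c22_Rp subr0. Qed.

Lemma sq : star q = q.
Proof. by rewrite /q starSub star1 sp. Qed.
Lemma gf1 z : mul p (mul z q) = mul (mul p z) q.
Proof. by rewrite !qR mulBr flexp. Qed.
Lemma gf2 z : mul q (mul z p) = mul (mul q z) p.
Proof. by rewrite !qL mulBl flexp. Qed.
Lemma gf3 z : mul q (mul z q) = mul (mul q z) q.
Proof. by rewrite qR mulBr gf2 qR. Qed.

Lemma c11_star y : cmp p p (star y) = star (cmp p p y).
Proof. by rewrite /cmp !starM sp flexp. Qed.
Lemma c12_star y : cmp p q (star y) = star (cmp q p y).
Proof. by rewrite /cmp !starM sp sq gf1. Qed.
Lemma c21_star y : cmp q p (star y) = star (cmp p q y).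
Proof. by rewrite /cmp !starM sp sq gf2. Qed.
Lemma c22_star y : cmp q q (star y) = star (cmp q q y).
Proof. by rewrite /cmp !starM sq gf3. Qed.

Lemma decomp y : y = cmp p p y + cmp p q y + cmp q p y + cmp q q y.
Proof.
have pq : p + q = one by rewrite /q addrC subrK.
by rewrite /cmp -mulDr1 -addrA -mulDr1 !pq !mul1r -mulDl1 pq mul1l.
Qed.

Lemma comp_ext y z : cmp p p y = cmp p p z -> cmp p q y = cmp p q z ->
  cmp q p y = cmp q p z -> cmp q q y = cmp q q z -> y = z.
Proof. by move=> h1 h2 h3 h4; rewrite (decomp y) (decomp z) h1 h2 h3 h4. Qed.
Variable B : lmodType C.
Variable mulB : B -> B -> B.
Variable starB : B -> B.
Hypothesis mulBDl : forall (c : C) x y z, mulB (c *: x + y) z = c *: mulB x z + mulB y z.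
Hypothesis mulBDr : forall (c : C) x y z, mulB z (c *: x + y) = c *: mulB z x + mulB z y.
Hypothesis starBD : forall (c : C) x y, starB (c *: x + y) = (c^*)%C *: starB x + starB y.


Lemma mulBDl1 x y w : mulB (x + y) w = mulB x w + mulB y w.
Proof. by have := mulBDl 1 x y w; rewrite !scale1r. Qed.
Lemma mulBDr1 x y w : mulB w (x + y) = mulB w x + mulB w y.
Proof. by have := mulBDr 1 x y w; rewrite !scale1r. Qed.
Lemma mulB0l w : mulB 0 w = 0.
Proof. have h := mulBDl1 0 0 w; rewrite addr0 in h.
by apply: (addrI (mulB 0 w)); rewrite -h addr0. Qed.
Lemma mulB0r w : mulB w 0 = 0.
Proof. have h := mulBDr1 0 0 w; rewrite addr0 in h.
by apply: (addrI (mulB w 0)); rewrite -h addr0. Qed.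
Lemma starBD1 x y : starB (x + y) = starB x + starB y.
Proof. by have := starBD 1 x y; rewrite !scale1r conj1' scale1r. Qed.

Variables sg z : C.
Hypothesis hz : z != 0.
Hypothesis hsg : sg * (z^*)%C = z.
Variable Phi : A -> B.
Hypothesis Phi_inj : injective Phi.
Hypothesis Phi_surj : forall b, exists a, Phi a = b.
Definition op x y := mul x y + sg *: mul y (star x).
Definition OpB u v := mulB u v + sg *: mulB v (starB u).
Hypothesis hop : forall x y, Phi (op x y) = OpB (Phi x) (Phi y).

Definition T x y := mul x y + mul y (star x).

Lemma OpBDr u v w : OpB u (v + w) = OpB u v + OpB u w.
Proof.
rewrite /OpB mulBDr1 mulBDl1 scalerDr.
by rewrite -!addrA; congr (_ + _); rewrite addrCA.
Qed.
Lemma OpBDl u v w : OpB (u + w) v = OpB u v + OpB w v.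
Proof.
rewrite /OpB mulBDl1 starBD1 mulBDr1 scalerDr.
by rewrite -!addrA; congr (_ + _); rewrite addrCA.
Qed.
Lemma OpB0 u : OpB u 0 = 0.
Proof. by rewrite /OpB mulB0r mulB0l scaler0 addr0. Qed.

Lemma Phi0 : Phi 0 = 0.
Proof.
have [b hb] := Phi_surj 0.
have h := hop 0 b.
rewrite /op mul0l star0 mul0r scaler0 addr0 hb OpB0 in h.
exact h.
Qed.

Lemma op2 x t s1 s2 : Phi t = Phi s1 + Phi s2 ->
  Phi (op x t) = Phi (op x s1) + Phi (op x s2).
Proof. by move=> h; rewrite !hop h OpBDr. Qed.
Lemma op2l y t s1 s2 : Phi t = Phi s1 + Phi s2 ->
  Phi (op t y) = Phi (op s1 y) + Phi (op s2 y).
Proof. by move=> h; rewrite !hop h OpBDl. Qed.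
Lemma op4 x t s1 s2 s3 s4 : Phi t = Phi s1 + Phi s2 + Phi s3 + Phi s4 ->
  Phi (op x t) = Phi (op x s1) + Phi (op x s2) + Phi (op x s3) + Phi (op x s4).
Proof. by move=> h; rewrite !hop h !OpBDr. Qed.

Lemma opZ x y : op (z *: x) y = z *: T x y.
Proof.
rewrite /op /T mulZl starZ mulZr scalerA hsg.
by rewrite scalerDr.
Qed.

Lemma dbl (x y : A) : x + x = y + y -> x = y.
Proof.
move=> h; have two : (1 + 1 : C) != 0.
  by rewrite (_ : 1 + 1 = 2%:R) ?pnatr_eq0 // natrD.
apply: (scalerI two); by rewrite !scalerDl !scale1r.
Qed.


Definition cE := (c11_Lp, c12_Lp, c21_Lp, c22_Lp, c11_Rp, c12_Rp, c21_Rp, c22_Rp,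
  c11_Lq, c12_Lq, c21_Lq, c22_Lq, c11_Rq, c12_Rq, c21_Rq, c22_Rq,
  c11_star, c12_star, c21_star, c22_star, cmpD, cmpB, cmpZ, cmpN, cmp0).

Lemma C1 a d t :
  cmp p q a = 0 -> cmp q p a = 0 -> cmp q q a = 0 ->
  cmp p p d = 0 -> cmp p q d = 0 -> cmp q p d = 0 ->
  Phi t = Phi a + Phi d -> t = a + d.
Proof.
move=> a12 a21 a22 d11 d12 d21 ht.
have Td : T p d = 0.
  by apply: comp_ext; rewrite /T sp !cE ?a12 ?a21 ?a22 ?d11 ?d12 ?d21 ?addr0 ?add0r.
have Ta : T q a = 0.
  by apply: comp_ext; rewrite /T sq !cE ?a12 ?a21 ?a22 ?d11 ?d12 ?d21 ?addr0 ?add0r.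
have h1 := @op2 (z *: p) _ _ _ ht; rewrite !opZ Td scaler0 Phi0 addr0 in h1.
move/Phi_inj/(scalerI hz): h1 => h1.
have h2 := @op2 (z *: q) _ _ _ ht; rewrite !opZ Ta scaler0 Phi0 add0r in h2.
move/Phi_inj/(scalerI hz): h2 => h2.
have e11 := congr1 (cmp p p) h1. have e12 := congr1 (cmp p q) h1.
have e21 := congr1 (cmp q p) h1. have e22 := congr1 (cmp q q) h2.
rewrite /T sp ?sq !cE ?a12 ?a21 ?a22 ?d11 ?d12 ?d21 ?addr0 ?add0r in e11 e12 e21 e22.
apply: comp_ext; rewrite !cE ?a12 ?a21 ?a22 ?d11 ?d12 ?d21 ?addr0 ?add0r //.
  exact: dbl.
exact: dbl.
Qed.

Lemma dbl0 (x : A) : x + x = 0 -> x = 0.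
Proof. by move=> h; apply: dbl; rewrite h addr0. Qed.
Lemma dbl0N (x : A) : - x + - x = 0 -> x = 0.
Proof. by move=> h; apply: dbl0; rewrite -opprD in h; apply/eqP; rewrite -oppr_eq0 h. Qed.

Definition sE := (star0, scaler0, addr0, add0r, subr0, sub0r, oppr0).

Lemma Tpq y : T (p - q) y = (mul p y - mul q y) + (mul y p - mul y q).
Proof. by rewrite /T starSub sp sq [mul (p - q) _]mulBl [mul _ (p - q)]mulBr. Qed.

Lemma C3 b c t :
  cmp p p b = 0 -> cmp q p b = 0 -> cmp q q b = 0 ->
  cmp p p c = 0 -> cmp p q c = 0 -> cmp q q c = 0 ->
  Phi t = Phi b + Phi c -> t = b + c.
Proof.
move=> b11 b21 b22 c11 c12 c22 ht.
have Obp : op b p = 0.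
  by apply: comp_ext; rewrite /op !cE ?b11 ?b21 ?b22 ?c11 ?c12 ?c22 !sE.
have Ocq : op c q = 0.
  by apply: comp_ext; rewrite /op !cE ?b11 ?b21 ?b22 ?c11 ?c12 ?c22 !sE.
have Tb : T (p - q) b = 0.
  by apply: comp_ext; rewrite Tpq !cE ?b11 ?b21 ?b22 ?c11 ?c12 ?c22 !sE ?subrr.
have Tc : T (p - q) c = 0.
  by apply: comp_ext; rewrite Tpq !cE ?b11 ?b21 ?b22 ?c11 ?c12 ?c22 !sE ?subrr ?addNr.
have h1 := @op2l p _ _ _ ht; rewrite Obp Phi0 add0r in h1.
move/Phi_inj: h1 => h1.
have h2 := @op2l q _ _ _ ht; rewrite Ocq Phi0 addr0 in h2.
move/Phi_inj: h2 => h2.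
have h3 := @op2 (z *: (p - q)) _ _ _ ht; rewrite !opZ Tb Tc scaler0 Phi0 addr0 -Phi0 in h3.
move/Phi_inj: h3; rewrite -(scaler0 _ z) => /(scalerI hz) h3.
have e21 := congr1 (cmp q p) h1. have e12 := congr1 (cmp p q) h2.
have e11 := congr1 (cmp p p) h3. have e22 := congr1 (cmp q q) h3.
rewrite /op ?Tpq ?sp ?sq !cE ?b11 ?b21 ?b22 ?c11 ?c12 ?c22 !sE in e11 e12 e21 e22.
apply: comp_ext; rewrite !cE ?b11 ?b21 ?b22 ?c11 ?c12 ?c22 !sE //.
    exact: dbl0 e11.
exact: dbl0N e22.
Qed.

Lemma ci : (('i : C)^*)%C = - 'i.
Proof. apply/eqP; rewrite eq_complex /= oppr0 !eqxx //. Qed.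
Lemma inz : ('i : C) != 0.
Proof. by rewrite eq_complex /= oner_eq0 andbF. Qed.

Lemma Tip y : T ('i *: p) y = 'i *: (mul p y - mul y p).
Proof. by rewrite /T starZ sp mulZl mulZr ci scaleNr scalerBr. Qed.

Lemma C4 a b c d t :
  cmp p q a = 0 -> cmp q p a = 0 -> cmp q q a = 0 ->
  cmp p p b = 0 -> cmp q p b = 0 -> cmp q q b = 0 ->
  cmp p p c = 0 -> cmp p q c = 0 -> cmp q q c = 0 ->
  cmp p p d = 0 -> cmp p q d = 0 -> cmp q p d = 0 ->
  Phi t = Phi a + Phi b + Phi c + Phi d -> t = a + b + c + d.
Proof.
move=> a12 a21 a22 b11 b21 b22 c11 c12 c22 d11 d12 d21 ht.
have Tb : T (p - q) b = 0.
  by apply: comp_ext; rewrite Tpq !cE ?a12 ?a21 ?a22 ?b11 ?b21 ?b22 ?c11 ?c12 ?c22 ?d11 ?d12 ?d21 ?sE ?subrr ?addNr ?sE.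
have Tc : T (p - q) c = 0.
  by apply: comp_ext; rewrite Tpq !cE ?a12 ?a21 ?a22 ?b11 ?b21 ?b22 ?c11 ?c12 ?c22 ?d11 ?d12 ?d21 ?sE ?subrr ?addNr ?sE.
have Ta : T ('i *: p) a = 0.
  by apply: comp_ext; rewrite Tip !cE ?a12 ?a21 ?a22 ?b11 ?b21 ?b22 ?c11 ?c12 ?c22 ?d11 ?d12 ?d21 ?sE ?subrr ?addNr ?sE.
have Td : T ('i *: p) d = 0.
  by apply: comp_ext; rewrite Tip !cE ?a12 ?a21 ?a22 ?b11 ?b21 ?b22 ?c11 ?c12 ?c22 ?d11 ?d12 ?d21 ?sE ?subrr ?addNr ?sE.
have h1 := @op4 (z *: (p - q)) _ _ _ _ _ ht.
rewrite !opZ Tb Tc scaler0 Phi0 !addr0 in h1.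
have h1' : z *: T (p - q) t = z *: T (p - q) a + z *: T (p - q) d.
  by apply: (C1 _ _ _ _ _ _ _ _ _ h1); rewrite cmpZ Tpq !cE ?a12 ?a21 ?a22 ?b11 ?b21 ?b22 ?c11 ?c12 ?c22 ?d11 ?d12 ?d21 ?sE ?subrr ?addNr ?sE.
rewrite -scalerDr in h1'.
move/(scalerI hz): h1' => h1'.
have h2 := @op4 (z *: ('i *: p)) _ _ _ _ _ ht.
rewrite !opZ Ta Td scaler0 Phi0 addr0 add0r in h2.
have h2' : z *: T ('i *: p) t = z *: T ('i *: p) b + z *: T ('i *: p) c.
  by apply: (C3 _ _ _ _ _ _ _ _ _ h2); rewrite cmpZ Tip !cE ?a12 ?a21 ?a22 ?b11 ?b21 ?b22 ?c11 ?c12 ?c22 ?d11 ?d12 ?d21 ?sE ?subrr ?addNr ?sE.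
rewrite -scalerDr in h2'.
move/(scalerI hz): h2' => h2'.
have e11 := congr1 (cmp p p) h1'. have e22 := congr1 (cmp q q) h1'.
have e12 := congr1 (cmp p q) h2'. have e21 := congr1 (cmp q p) h2'.
rewrite ?Tpq ?Tip !cE ?a12 ?a21 ?a22 ?b11 ?b21 ?b22 ?c11 ?c12 ?c22 ?d11 ?d12 ?d21 ?sE in e11 e22 e12 e21.
apply: comp_ext; rewrite !cE ?a12 ?a21 ?a22 ?b11 ?b21 ?b22 ?c11 ?c12 ?c22 ?d11 ?d12 ?d21 ?sE.
- exact: dbl e11.
- exact: (scalerI inz e12).
- by apply: oppr_inj; apply: (scalerI inz e21).
- by apply: oppr_inj; apply: dbl.
Qed.

Lemma main_sec a b c d :
  (exists x, a = mul (mul p x) p) -> (exists x, b = mul (mul p x) q) ->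
  (exists x, c = mul (mul q x) p) -> (exists x, d = mul (mul q x) q) ->
  Phi (a + b + c + d) = Phi a + Phi b + Phi c + Phi d.
Proof.
move=> [xa ->] [xb ->] [xc ->] [xd ->].
have [t ht] := Phi_surj (Phi (mul (mul p xa) p) + Phi (mul (mul p xb) q)
  + Phi (mul (mul q xc) p) + Phi (mul (mul q xd) q)).
rewrite -ht; congr Phi; symmetry.
by apply: (C4 _ _ _ _ _ _ _ _ _ _ _ _ _ _ _ _ _ ht); rewrite !cE ?sE.
Qed.

End Alg.

Theorem claim2p4 (R : realType)
  (A : lmodType R[i]) (mulA : A -> A -> A) (starA : A -> A) (normA : A -> R)
  (oneA : A)
  (B : lmodType R[i]) (mulB : B -> B -> B) (starB : B -> B)
  (Phi : A -> B) (p1 : A) :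
  alt_Wstar_factor mulA starA normA ->
  is_unit_of mulA oneA ->
  alt_star_alg mulB starB ->
  bijective Phi ->
  (preserves_plus mulA starA mulB starB Phi \/
   preserves_minus mulA starA mulB starB Phi) ->
  projection mulA starA p1 ->
  p1 <> oneA ->
  let p2 := oneA - p1 in
  forall a11 b12 c21 d22 : A,
    peirce mulA p1 p1 a11 -> peirce mulA p1 p2 b12 ->
    peirce mulA p2 p1 c21 -> peirce mulA p2 p2 d22 ->
    Phi (a11 + b12 + c21 + d22) = Phi a11 + Phi b12 + Phi c21 + Phi d22.
Proof.
move=> [[[[hDl hDr hal har] [hsD hsK hsM]] _ _ _] _ _] hunit
  [[bDl bDr _ _] [bsD _ _]] [g gK Kg] hpres [_ sp pp] _ p2 a11 b12 c21 d22 ha hb hc hd.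
have inj : injective Phi := can_inj gK.
have surj : forall b, exists a, Phi a = b by move=> b; exists (g b); rewrite Kg.
case: hpres => hpres.
- have hsg : (1 : R[i]) * ((1 : R[i])^*)%C = 1 by rewrite conj1' mulr1.
  have hop : forall x y, Phi (@op R A mulA starA 1 x y) = @OpB R B mulB starB 1 (Phi x) (Phi y).
    by move=> x y; rewrite /op /OpB !scale1r hpres.
  exact: (@main_sec R A mulA starA oneA hDl hDr hal har hsD hsK hsM hunit p1 pp sp B mulB starB bDl bDr bsD 1 1 (oner_neq0 _) hsg Phi inj surj hop a11 b12 c21 d22 ha hb hc hd).
- have hsg : (-1 : R[i]) * (('i : R[i])^*)%C = 'i by rewrite ci mulN1r opprK.
  have hop : forall x y, Phi (@op R A mulA starA (-1) x y) = @OpB R B mulB starB (-1) (Phi x) (Phi y).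
    by move=> x y; rewrite /op /OpB !scaleN1r hpres.
  exact: (@main_sec R A mulA starA oneA hDl hDr hal har hsD hsK hsM hunit p1 pp sp B mulB starB bDl bDr bsD (-1) 'i (@inz R) hsg Phi inj surj hop a11 b12 c21 d22 ha hb hc hd).
Qed.
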